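(* There exists $\varepsilon_0>0$ such that for every $\varepsilon\in(0,\varepsilon_0)$ the following holds. Let $\mathbf{U}$ be the $7\times 7$ matrix $$\mathbf{U}=\begin{pmatrix} 0 & -1 & \varepsilon & -10 & -\tfrac13+\varepsilon & -\tfrac13+\varepsilon & -\tfrac13+\varepsilon\\ \varepsilon & 0 & -1 & -10 & -\tfrac13+\varepsilon & -\tfrac13+\varepsilon & -\tfrac13+\varepsilon\\ -1 & \varepsilon & 0 & -10 & -\tfrac13+\varepsilon & -\tfrac13+\varepsilon & -\tfrac13+\varepsilon\\ -2 & -2 & 2 & 0 & -\tfrac13 & -\tfrac13 & -\tfrac13\\ -\tfrac13 & -\tfrac13 & -\tfrac13 & 10 & 0 & -1 & \varepsilon\\ -\tfrac13 & -\tfrac13 & -\tfrac13 & 10 & \varepsilon & 0 & -1\\ -\tfrac13 & -\tfrac13 & -\tfrac13 & 10 & -1 & \varepsilon & 0 \end{pmatrix},\qquad \bar{\mathbf{U}}=\begin{pmatrix} 0 & -1 & \varepsilon\\ \varepsilon & 0 & -1\\ -1 & \varepsilon & 0\end{pmatrix}.$$ Let $\mathbf{x}(\cdot):\mathbb{R}\to S_7$ be an interior solution (i.e. $x_i(t)>0$ for all $i$ and all $t\in\mathbb{R}$) of the replicator dynamics $\dot x_i=x_i[(\mathbf{U}\mathbf{x})_i-\mathbf{x}\cdot\mathbf{U}\mathbf{x}]$. Set $\lambda(t)=x_1(t)+x_2(t)+x_3(t)$, $\bar x_i=x_i/\lambda$ for $i=1,2,3$, $\bar{\mathbf{x}}=(\bar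 x_1,\bar x_2,\bar x_3)$ and $\bar\tau(t)=\int_0^t\lambda(s)\,ds$. Let $\mathbf{y}(\cdot)$ be the solution of the replicator dynamics $\dot y_i=y_i[(\bar{\mathbf{U}}\mathbf{y})_i-\mathbf{y}\cdot\bar{\mathbf{U}}\mathbf{y}]$ on $S_3$ with $\mathbf{y}(0)=\bar{\mathbf{x}}(0)$. Then $$\dot{\bar x}_i=\lambda\,\bar x_i\big[(\bar{\mathbf{U}}\bar{\mathbf{x}})_i-\bar{\mathbf{x}}\cdot\bar{\mathbf{U}}\bar{\mathbf{x}}\big]\quad (i=1,2,3),$$ and $\bar{\mathbf{x}}(t)=\mathbf{y}(\bar\tau(t))$ for all $t\in\mathbb{R}$.
   Context: $S_n=\{\mathbf{x}\in\mathbb{R}_+^n:\sum_i x_i=1\}$. The paper assumes throughout that $\varepsilon>0$ is ''small enough''. *)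

(* Defs.v *)
From Stdlib Require Import Reals Lra.
From Coquelicot Require Import Coquelicot.
Open Scope R_scope.

(* Vectors in R^n are functions nat -> R, components 0..n-1
   (paper index i corresponds to index i-1 here). *)

Definition Umat (eps : R) (i j : nat) : R :=
  match i, j with
  | 0,0 => 0 | 0,1 => -1 | 0,2 => eps | 0,3 => -10
  | 1,0 => eps | 1,1 => 0 | 1,2 => -1 | 1,3 => -10
  | 2,0 => -1 | 2,1 => eps | 2,2 => 0 | 2,3 => -10
  | 0,_ | 1,_ | 2,_ => -1/3 + eps
  | 3,0 => -2 | 3,1 => -2 | 3,2 => 2 | 3,3 => 0 | 3,_ => -1/3
  | 4,3 | 5,3 | 6,3 => 10
  | 4,4 => 0 | 4,5 => -1 | 4,6 => eps
  | 5,4 => eps | 5,5 => 0 | 5,6 => -1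
  | 6,4 => -1 | 6,5 => eps | 6,6 => 0
  | 4,_ | 5,_ | 6,_ => -1/3
  | _,_ => 0
  end.

Definition Ubar (eps : R) (i j : nat) : R :=
  match i, j with
  | 0,0 => 0 | 0,1 => -1 | 0,2 => eps
  | 1,0 => eps | 1,1 => 0 | 1,2 => -1
  | 2,0 => -1 | 2,1 => eps | 2,2 => 0
  | _,_ => 0
  end.

Definition matvec (n : nat) (A : nat -> nat -> R) (v : nat -> R) (i : nat) : R :=
  sum_f_R0 (fun j => A i j * v j) (n - 1).

Definition quad (n : nat) (A : nat -> nat -> R) (v : nat -> R) : R :=
  sum_f_R0 (fun i => v i * matvec n A v i) (n - 1).

Definition in_simplex (n : nat) (v : nat -> R) : Prop :=
  (forall i, (i < n)%nat -> 0 <= v i) /\ sum_f_R0 v (n - 1) = 1.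

Definition replicator_solution (n : nat) (A : nat -> nat -> R) (x : R -> nat -> R) : Prop :=
  forall t i, (i < n)%nat ->
    is_derive (fun s => x s i) t (x t i * (matvec n A (x t) i - quad n A (x t))).

(* Main.v *)
Require Import Defs.
From Stdlib Require Import Reals Lra Psatz Lia.
From Coquelicot Require Import Coquelicot.
Open Scope R_scope.

Lemma Rabs_le_inv' (a b : R) : Rabs a <= b -> - b <= a <= b.
Proof. intros H. split. pose proof (Rabs_Ropp a); pose proof (Rle_abs (-a)); lra. pose proof (Rle_abs a); lra. Qed.

Lemma abs3 (d0 d1 d2 c0 c1 c2 M : R) :
  Rabs c0 <= M -> Rabs c1 <= M -> Rabs c2 <= M ->
  Rabs (d0*c0 + d1*c1 + d2*c2) <= (Rabs d0 + Rabs d1 + Rabs d2) * M.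
Proof.
  intros H0 H1 H2.
  assert (0 <= M) by (pose proof (Rabs_pos c0); lra).
  eapply Rle_trans. apply Rabs_triang.
  eapply Rle_trans. apply Rplus_le_compat_r. apply Rabs_triang.
  rewrite !Rabs_mult.
  pose proof (Rabs_pos d0); pose proof (Rabs_pos d1); pose proof (Rabs_pos d2).
  pose proof (Rmult_le_compat_l _ _ _ H3 H0).
  pose proof (Rmult_le_compat_l _ _ _ H4 H1).
  pose proof (Rmult_le_compat_l _ _ _ H5 H2).
  lra.
Qed.

Lemma cvx3 (b0 b1 b2 w0 w1 w2 M : R) :
  0 <= b0 -> 0 <= b1 -> 0 <= b2 -> b0 + b1 + b2 = 1 ->
  Rabs w0 <= M -> Rabs w1 <= M -> Rabs w2 <= M ->
  Rabs (b0*w0 + b1*w1 + b2*w2) <= M.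
Proof.
  intros. pose proof (abs3 b0 b1 b2 w0 w1 w2 M H3 H4 H5).
  rewrite (Rabs_right b0), (Rabs_right b1), (Rabs_right b2) in H6 by lra.
  rewrite H2 in H6. lra.
Qed.

Lemma eps_abs (eps u : R) : 0 < eps < 1 -> Rabs (eps * u) <= Rabs u.
Proof. intros. rewrite Rabs_mult, Rabs_right by lra.
  pose proof (Rabs_pos u). nra. Qed.

Lemma S2 (d0 d1 d2 : R) :
  (Rabs d0 + Rabs d1 + Rabs d2) * (Rabs d0 + Rabs d1 + Rabs d2)
  <= 3 * (d0*d0 + d1*d1 + d2*d2).
Proof.
  assert (E0: Rabs d0 * Rabs d0 = d0 * d0) by (rewrite <- Rabs_mult; apply Rabs_right; nra).
  assert (E1: Rabs d1 * Rabs d1 = d1 * d1) by (rewrite <- Rabs_mult; apply Rabs_right; nra).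
  assert (E2: Rabs d2 * Rabs d2 = d2 * d2) by (rewrite <- Rabs_mult; apply Rabs_right; nra).
  rewrite <- E0, <- E1, <- E2.
  set (u0 := Rabs d0); set (u1 := Rabs d1); set (u2 := Rabs d2).
  pose proof (Rle_0_sqr (u0-u1)); pose proof (Rle_0_sqr (u1-u2)); pose proof (Rle_0_sqr (u0-u2)).
  unfold Rsqr in *. lra.
Qed.

Definition G0 (eps a0 a1 a2 : R) := -a1 + eps*a2.
Definition G1 (eps a0 a1 a2 : R) := eps*a0 - a2.
Definition G2 (eps a0 a1 a2 : R) := -a0 + eps*a1.

Lemma lip_explicit (eps a0 a1 a2 b0 b1 b2 : R) :
  0 < eps < 1 ->
  0 <= a0 -> 0 <= a1 -> 0 <= a2 -> a0 + a1 + a2 = 1 ->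
  0 <= b0 -> 0 <= b1 -> 0 <= b2 -> b0 + b1 + b2 = 1 ->
  let q := fun a0 a1 a2 => a0 * G0 eps a0 a1 a2 + a1 * G1 eps a0 a1 a2 + a2 * G2 eps a0 a1 a2 in
  Rabs ((a0 - b0) * (a0 * (G0 eps a0 a1 a2 - q a0 a1 a2) - b0 * (G0 eps b0 b1 b2 - q b0 b1 b2))
      + (a1 - b1) * (a1 * (G1 eps a0 a1 a2 - q a0 a1 a2) - b1 * (G1 eps b0 b1 b2 - q b0 b1 b2))
      + (a2 - b2) * (a2 * (G2 eps a0 a1 a2 - q a0 a1 a2) - b2 * (G2 eps b0 b1 b2 - q b0 b1 b2)))
  <= 13 * ((a0-b0)*(a0-b0) + (a1-b1)*(a1-b1) + (a2-b2)*(a2-b2)).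
Proof.
  intros He Ha0 Ha1 Ha2 Ha Hb0 Hb1 Hb2 Hb q.
  set (d0 := a0 - b0); set (d1 := a1 - b1); set (d2 := a2 - b2).
  set (S := Rabs d0 + Rabs d1 + Rabs d2).
  set (N := d0*d0 + d1*d1 + d2*d2).
  set (g0 := G0 eps a0 a1 a2); set (g1 := G1 eps a0 a1 a2); set (g2 := G2 eps a0 a1 a2).
  set (h0 := G0 eps d0 d1 d2); set (h1 := G1 eps d0 d1 d2); set (h2 := G2 eps d0 d1 d2).
  assert (Hg0 : Rabs g0 <= 1).
  { unfold g0, G0. apply Rabs_le. split; nra. }
  assert (Hg1 : Rabs g1 <= 1).
  { unfold g1, G1. apply Rabs_le. split; nra. }
  assert (Hg2 : Rabs g2 <= 1).
  { unfold g2, G2. apply Rabs_le. split; nra. }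
  assert (Hh0 : Rabs h0 <= S).
  { unfold h0, G0, S. eapply Rle_trans. apply Rabs_triang. rewrite Rabs_Ropp.
    pose proof (eps_abs eps d2 He). pose proof (Rabs_pos d0). lra. }
  assert (Hh1 : Rabs h1 <= S).
  { unfold h1, G1, S. unfold Rminus. eapply Rle_trans. apply Rabs_triang. rewrite Rabs_Ropp.
    pose proof (eps_abs eps d0 He). pose proof (Rabs_pos d1). lra. }
  assert (Hh2 : Rabs h2 <= S).
  { unfold h2, G2, S. eapply Rle_trans. apply Rabs_triang. rewrite Rabs_Ropp.
    pose proof (eps_abs eps d1 He). pose proof (Rabs_pos d2). lra. }
  assert (Hq : Rabs (q a0 a1 a2) <= 1).
  { unfold q. fold g0 g1 g2. apply cvx3; auto. }
  assert (Hb0' : Rabs b0 <= 1) by (apply Rabs_le; lra).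
  assert (Hb1' : Rabs b1 <= 1) by (apply Rabs_le; lra).
  assert (Hb2' : Rabs b2 <= 1) by (apply Rabs_le; lra).
  assert (HS : 0 <= S) by (unfold S; pose proof (Rabs_pos d0); pose proof (Rabs_pos d1); pose proof (Rabs_pos d2); lra).
  assert (HN : 0 <= N) by (unfold N; nra).
  match goal with |- Rabs ?X <= _ => assert (Edec : X
      = (d0*(d0*g0) + d1*(d1*g1) + d2*(d2*g2))
        + (d0*(b0*h0) + d1*(b1*h1) + d2*(b2*h2))
        - q a0 a1 a2 * N
        - (d0*b0 + d1*b1 + d2*b2) * (d0*g0 + d1*g1 + d2*g2)
        - (d0*b0 + d1*b1 + d2*b2) * (b0*h0 + b1*h1 + b2*h2)) by (unfold N, h0, h1, h2, g0, g1, g2, d0, d1, d2, q, G0, G1, G2; cbv beta; ring) end.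
  rewrite Edec.
  assert (Hm : forall u v w M, Rabs u <= 1 -> Rabs v <= M -> Rabs w <= M -> Rabs (u*v) <= M /\ Rabs (v * u) <= M).
  { intros u v w M Hu Hv _. rewrite Rabs_mult, (Rabs_mult v). pose proof (Rabs_pos u); pose proof (Rabs_pos v).
    split; nra. }
  assert (Hd0 : Rabs d0 <= S) by (unfold S; pose proof (Rabs_pos d1); pose proof (Rabs_pos d2); lra).
  assert (Hd1 : Rabs d1 <= S) by (unfold S; pose proof (Rabs_pos d0); pose proof (Rabs_pos d2); lra).
  assert (Hd2 : Rabs d2 <= S) by (unfold S; pose proof (Rabs_pos d1); pose proof (Rabs_pos d0); lra).
  assert (T1 : Rabs (d0*(d0*g0) + d1*(d1*g1) + d2*(d2*g2)) <= S * S).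
  { apply abs3; [apply (Hm g0 d0 d0 S) | apply (Hm g1 d1 d1 S) | apply (Hm g2 d2 d2 S)]; auto. }
  assert (T2 : Rabs (d0*(b0*h0) + d1*(b1*h1) + d2*(b2*h2)) <= S * S).
  { apply abs3; [apply (Hm b0 h0 h0 S) | apply (Hm b1 h1 h1 S) | apply (Hm b2 h2 h2 S)]; auto. }
  assert (T3 : Rabs (q a0 a1 a2 * N) <= N).
  { rewrite Rabs_mult, (Rabs_right N) by lra. pose proof (Rabs_pos (q a0 a1 a2)). nra. }
  assert (P1 : Rabs (d0*b0 + d1*b1 + d2*b2) <= S).
  { pose proof (abs3 d0 d1 d2 b0 b1 b2 1 Hb0' Hb1' Hb2'). fold S in H. lra. }
  assert (Q1 : Rabs (d0*g0 + d1*g1 + d2*g2) <= S).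
  { pose proof (abs3 d0 d1 d2 g0 g1 g2 1 Hg0 Hg1 Hg2). fold S in H. lra. }
  assert (W1 : Rabs (b0*h0 + b1*h1 + b2*h2) <= S) by (apply cvx3; auto).
  assert (T4 : Rabs ((d0*b0 + d1*b1 + d2*b2) * (d0*g0 + d1*g1 + d2*g2)) <= S * S).
  { rewrite Rabs_mult. apply Rmult_le_compat; auto using Rabs_pos. }
  assert (T5 : Rabs ((d0*b0 + d1*b1 + d2*b2) * (b0*h0 + b1*h1 + b2*h2)) <= S * S).
  { rewrite Rabs_mult. apply Rmult_le_compat; auto using Rabs_pos. }
  pose proof (S2 d0 d1 d2). fold S N in H.
  fold N.
  set (A1 := d0*(d0*g0) + d1*(d1*g1) + d2*(d2*g2)) in *.
  set (A2 := d0*(b0*h0) + d1*(b1*h1) + d2*(b2*h2)) in *.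
  set (A3 := q a0 a1 a2 * N) in *.
  set (A4 := (d0*b0 + d1*b1 + d2*b2) * (d0*g0 + d1*g1 + d2*g2)) in *.
  set (A5 := (d0*b0 + d1*b1 + d2*b2) * (b0*h0 + b1*h1 + b2*h2)) in *.
  apply Rabs_le. apply Rabs_le_inv' in T1. apply Rabs_le_inv' in T2. apply Rabs_le_inv' in T3.
  apply Rabs_le_inv' in T4. apply Rabs_le_inv' in T5. lra.
Qed.
Lemma dplus (f g : R -> R) t a b : is_derive f t a -> is_derive g t b -> is_derive (fun s => f s + g s) t (a+b).
Proof. intros H H0. exact (is_derive_plus f g t a b H H0). Qed.
Lemma dminus (f g : R -> R) t a b : is_derive f t a -> is_derive g t b -> is_derive (fun s => f s - g s) t (a-b).
Proof. intros H H0. exact (is_derive_minus f g t a b H H0). Qed.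
Lemma dmult (f g : R -> R) t a b : is_derive f t a -> is_derive g t b -> is_derive (fun s => f s * g s) t (a * g t + f t * b).
Proof. intros H H0. exact (is_derive_mult f g t a b H H0 Rmult_comm). Qed.
Lemma dcomp (f g : R -> R) t a b : is_derive f (g t) a -> is_derive g t b -> is_derive (fun s => f (g s)) t (b * a).
Proof. intros H H0. exact (is_derive_comp f g t a b H H0). Qed.
Lemma dval (f : R -> R) (t a b : R) : is_derive f t a -> @eq R a b -> is_derive f t b.
Proof. intros H <-; exact H. Qed.

Definition Fr (eps : R) (v : nat -> R) (i : nat) : R :=
  v i * (matvec 3 (Ubar eps) v i - quad 3 (Ubar eps) v).

Lemma lip (eps : R) (a b : nat -> R) : 0 < eps < 1 -> in_simplex 3 a -> in_simplex 3 b ->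
  Rabs ((a 0%nat - b 0%nat) * (Fr eps a 0 - Fr eps b 0)
      + (a 1%nat - b 1%nat) * (Fr eps a 1 - Fr eps b 1)
      + (a 2%nat - b 2%nat) * (Fr eps a 2 - Fr eps b 2))
  <= 13 * ((a 0%nat - b 0%nat) * (a 0%nat - b 0%nat) + (a 1%nat - b 1%nat) * (a 1%nat - b 1%nat)
           + (a 2%nat - b 2%nat) * (a 2%nat - b 2%nat)).
Proof.
  intros He [Ha As] [Hb Bs]. simpl in As, Bs.
  pose proof (lip_explicit eps (a 0%nat) (a 1%nat) (a 2%nat) (b 0%nat) (b 1%nat) (b 2%nat) He
    (Ha 0%nat ltac:(lia)) (Ha 1%nat ltac:(lia)) (Ha 2%nat ltac:(lia)) As
    (Hb 0%nat ltac:(lia)) (Hb 1%nat ltac:(lia)) (Hb 2%nat ltac:(lia)) Bs) as H.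
  simpl in H. unfold G0, G1, G2 in H.
  unfold Fr, quad, matvec. simpl.
  match goal with |- Rabs ?X <= ?Y => match type of H with Rabs ?X' <= ?Y' =>
    replace X with X' by ring; exact H end end.
Qed.

Lemma nonincr (h dh : R -> R) a b : a <= b -> (forall s, is_derive h s (dh s)) ->
  (forall s, dh s <= 0) -> h b <= h a.
Proof.
  intros Hab Hd Hn. destruct (Req_dec a b) as [<-|Hne]; [lra|].
  destruct (MVT_gen h a b dh) as [c [_ Hc]].
  - intros; apply Hd.
  - intros. apply continuity_pt_filterlim. exact (ex_derive_continuous h x (ex_intro _ (dh x) (Hd x))).
  - specialize (Hn c). nra.
Qed.

Lemma dexp (K s : R) : is_derive (fun s => exp (K*s)) s (K * exp (K*s)).
Proof. auto_derive; auto. ring. Qed.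

Lemma gron (e de : R -> R) K : (forall t, is_derive e t (de t)) -> (forall t, 0 <= e t) ->
  (forall t, Rabs (de t) <= K * e t) -> e 0 = 0 -> forall t, e t = 0.
Proof.
  intros Hd Hp Hb H0 t.
  assert (HK: forall t, -(K*e t) <= de t <= K*e t) by (intro s; apply Rabs_le_inv', Hb).
  apply Rle_antisym; [|apply Hp].
  destruct (Rle_or_lt 0 t) as [Ht|Ht].
  - assert (H1 : e t * exp (-K*t) <= e 0 * exp (-K*0)).
    { apply (nonincr (fun s => e s * exp (-K*s)) (fun s => de s * exp(-K*s) + e s * (-K*exp(-K*s)))); auto.
      - intros s. eapply dval. apply dmult. apply Hd. apply dexp. reflexivity.
      - intros s. specialize (HK s). pose proof (exp_pos (-K*s)). nra. }
    rewrite H0 in H1. pose proof (exp_pos (-K*t)). nra.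
  - assert (H1 : - (e 0 * exp (K*0)) <= - (e t * exp (K*t))).
    { apply (nonincr (fun s => - (e s * exp (K*s))) (fun s => - (de s * exp(K*s) + e s * (K*exp(K*s))))); [lra| |].
      - intros s. eapply dval. apply (is_derive_opp (fun s => e s * exp (K*s))).
        eapply dval. apply dmult. apply Hd. apply dexp. cbv beta. reflexivity. reflexivity.
      - intros s. specialize (HK s). pose proof (exp_pos (K*s)). nra. }
    rewrite H0 in H1. pose proof (exp_pos (K*t)). nra.
Qed.

Lemma sq0 (u : R) : 0 <= u * u.
Proof. nra. Qed.
Lemma sqz (u : R) : u * u = 0 -> u = 0.
Proof. intros H. destruct (Rmult_integral _ _ H); auto. Qed.
Lemma bnd (r l E : R) : r <= 13 * E -> 0 < l <= 1 -> 0 <= r -> 2 * l * r <= 26 * E.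
Proof. intros. assert (0 <= E) by lra. nra. Qed.

Theorem lemma3 :
  exists eps0 : R, 0 < eps0 /\
  forall eps : R, 0 < eps < eps0 ->
  forall x : R -> nat -> R,
    (forall t, in_simplex 7 (x t)) ->
    (forall t i, (i < 7)%nat -> 0 < x t i) ->
    replicator_solution 7 (Umat eps) x ->
    let lam := fun t => x t 0%nat + x t 1%nat + x t 2%nat in
    let xbar := fun t i => x t i / lam t in
    let taubar := fun t => RInt lam 0 t in
    (forall t i, (i < 3)%nat ->
       is_derive (fun s => xbar s i) t
         (lam t * (xbar t i * (matvec 3 (Ubar eps) (xbar t) i
                               - quad 3 (Ubar eps) (xbar t))))) /\
    (forall y : R -> nat -> R,
       (forall t, in_simplex 3 (y t)) ->
       replicator_solution 3 (Ubar eps) y ->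
       (forall i, (i < 3)%nat -> y 0 i = xbar 0 i) ->
       forall t i, (i < 3)%nat -> xbar t i = y (taubar t) i).
Proof.
  exists 1. split; [lra|].
  intros eps Heps x Hsimp Hpos Hrep lam xbar taubar.
  assert (He : 0 < eps < 1) by lra.
  assert (Hlam : forall t, 0 < lam t <= 1).
  { intros t. unfold lam. destruct (Hsimp t) as [Hn Hs]. simpl in Hs.
    pose proof (Hpos t 0%nat ltac:(lia)). pose proof (Hpos t 1%nat ltac:(lia)).
    pose proof (Hpos t 2%nat ltac:(lia)). pose proof (Hn 3%nat ltac:(lia)).
    pose proof (Hn 4%nat ltac:(lia)). pose proof (Hn 5%nat ltac:(lia)).
    pose proof (Hn 6%nat ltac:(lia)). lra. }
  assert (Hdlam : forall t, is_derive lam t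
     (x t 0%nat * (matvec 7 (Umat eps) (x t) 0 - quad 7 (Umat eps) (x t))
      + x t 1%nat * (matvec 7 (Umat eps) (x t) 1 - quad 7 (Umat eps) (x t))
      + x t 2%nat * (matvec 7 (Umat eps) (x t) 2 - quad 7 (Umat eps) (x t)))).
  { intros t. unfold lam. apply dplus; [apply dplus|]; apply Hrep; lia. }
  assert (Hdx : forall t i, (i < 3)%nat ->
     is_derive (fun s => xbar s i) t (lam t * Fr eps (xbar t) i)).
  { intros t i Hi. unfold xbar.
    pose proof (Hlam t) as Hl.
    eapply dval. apply (is_derive_div (fun s => x s i) lam). apply Hrep; lia. apply Hdlam. lra.
    unfold lam in *. unfold Fr, quad, matvec.
    destruct i as [|[|[|i]]]; [| | |lia]; simpl; field; lra. }
  split.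
  { intros t i Hi. exact (Hdx t i Hi). }
  intros y Hys Hyr Hy0.
  assert (Hcont : forall t, continuous lam t).
  { intros t. exact (ex_derive_continuous lam t (ex_intro _ _ (Hdlam t))). }
  assert (Htau : forall t, is_derive taubar t (lam t)).
  { intros t. unfold taubar. apply (is_derive_RInt lam (fun t => RInt lam 0 t) 0 t).
    - apply filter_forall. intros b.
      exact (@RInt_correct R_CompleteNormedModule lam 0 b (@ex_RInt_continuous R_CompleteNormedModule lam 0 b (fun z _ => Hcont z))).
    - apply Hcont. }
  set (z := fun t i => y (taubar t) i).
  assert (Hdz : forall t i, (i < 3)%nat ->
     is_derive (fun s => z s i) t (lam t * Fr eps (z t) i)).
  { intros t i Hi. unfold z. eapply dval. apply (dcomp (fun u => y u i) taubar).
    apply Hyr; auto. apply Htau. reflexivity. }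
  assert (Hxs : forall t, in_simplex 3 (xbar t)).
  { intros t. pose proof (Hlam t). split.
    - intros i Hi. unfold xbar. apply Rlt_le, Rdiv_lt_0_compat; auto; try lra. apply Hpos; lia.
    - simpl. unfold xbar, lam in *. field. lra. }
  set (e := fun t => (xbar t 0%nat - z t 0%nat) * (xbar t 0%nat - z t 0%nat)
                   + (xbar t 1%nat - z t 1%nat) * (xbar t 1%nat - z t 1%nat)
                   + (xbar t 2%nat - z t 2%nat) * (xbar t 2%nat - z t 2%nat)).
  set (de := fun t => 2 * lam t *
      ((xbar t 0%nat - z t 0%nat) * (Fr eps (xbar t) 0 - Fr eps (z t) 0)
      + (xbar t 1%nat - z t 1%nat) * (Fr eps (xbar t) 1 - Fr eps (z t) 1)
      + (xbar t 2%nat - z t 2%nat) * (Fr eps (xbar t) 2 - Fr eps (z t) 2))).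
  assert (Hde : forall t, is_derive e t (de t)).
  { intros t.
    pose proof (Hdx t 0%nat ltac:(lia)) as A0. pose proof (Hdx t 1%nat ltac:(lia)) as A1.
    pose proof (Hdx t 2%nat ltac:(lia)) as A2.
    pose proof (Hdz t 0%nat ltac:(lia)) as B0. pose proof (Hdz t 1%nat ltac:(lia)) as B1.
    pose proof (Hdz t 2%nat ltac:(lia)) as B2.
    pose proof (dminus _ _ t _ _ A0 B0) as C0.
    pose proof (dminus _ _ t _ _ A1 B1) as C1.
    pose proof (dminus _ _ t _ _ A2 B2) as C2.
    pose proof (dplus _ _ t _ _ (dplus _ _ t _ _ (dmult _ _ t _ _ C0 C0) (dmult _ _ t _ _ C1 C1))
                 (dmult _ _ t _ _ C2 C2)) as D.
    cbv beta in D.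
    refine (dval _ t _ _ D _).
    unfold de. clearbody e z xbar lam. ring. }
  assert (Hez : forall t, e t = 0).
  { apply (gron e de 26); auto.
    - intros t. unfold e. pose proof (sq0 (xbar t 0%nat - z t 0%nat)).
      pose proof (sq0 (xbar t 1%nat - z t 1%nat)). pose proof (sq0 (xbar t 2%nat - z t 2%nat)). lra.
    - intros t. unfold de. pose proof (lip eps (xbar t) (z t) He (Hxs t) (Hys (taubar t))) as HL.
      change (Rabs (2 * lam t * ((xbar t 0%nat - z t 0%nat) * (Fr eps (xbar t) 0 - Fr eps (z t) 0)
      + (xbar t 1%nat - z t 1%nat) * (Fr eps (xbar t) 1 - Fr eps (z t) 1)
      + (xbar t 2%nat - z t 2%nat) * (Fr eps (xbar t) 2 - Fr eps (z t) 2))) <= 26 * e t).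
      unfold e. pose proof (Hlam t) as Hl.
      rewrite Rabs_mult, (Rabs_right (2 * lam t)) by lra.
      apply bnd; auto. apply Rabs_pos.
    - assert (Ht0 : taubar 0 = 0) by (unfold taubar; exact (@RInt_point R_CompleteNormedModule 0 lam)).
      unfold e, z. rewrite Ht0, !Hy0 by lia. ring. }
  intros t i Hi. specialize (Hez t). unfold e in Hez. fold (z t i).
  assert (xbar t i - z t i = 0); [|lra].
  pose proof (sq0 (xbar t 0%nat - z t 0%nat)).
  pose proof (sq0 (xbar t 1%nat - z t 1%nat)). pose proof (sq0 (xbar t 2%nat - z t 2%nat)).
  destruct i as [|[|[|i]]]; [| | |lia]; apply sqz; lra.
Qed.
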